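(* Consider the setting described in the context, but where the participation rate, delivery rate, reserve price and demand price may additionally depend on the state $s_t$ of the desired load trajectory (so the user transition probabilities and per-step costs depend on $s_t$). For $m\in\mathcal{M}$, $s\in\mathcal{S}$ define $V$ by $$V(m,s)=\min_{g^r,g^d\in\{1,\dots,k\}}\Big(\ell(m,s,g^r,g^d)+\beta\sum_{\hat m\in\mathcal{M}}\mathbb{P}(\hat m\mid m,s,g^r,g^d)\,V(\hat m,f(s))\Big),$$ where $\ell$ is the per-step cost $\frac1n\big(\sum_i c(x^i_t,u^i_t,m_t)+D(m_t,\theta_t)\big)$ expressed as a function of $(m_t,s_t,g^r_t,g^d_t)$ and $\mathbb{P}(\hat m\mid m,s,g^r,g^d)$ is the probability that $m_{t+1}=\hat m$ given $m_t=m$, $s_t=s$, reserve action $g^r$ and demand action $g^d$. If $(\mathfrak{g}^{r,*}(m,s),\mathfrak{g}^{d,*}(m,s))$ is a minimizer, then $u^{i,*}_t=\mathbb{1}(x^i_t=0)\mathfrak{g}^{r,*}(m_t,s_t)+\mathbb{1}(x^i_t=1)\mathfrak{g}^{d,*}(m_t,s_t)$ is an optimal control law, i.e. its strategy $g^*$ satisfies $J(g^* )\le J(g)$ for all admissible strategies $g$.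
   Context: Base setting: $n\in\mathbb{N}$ users, demand probability $p\in(0,1)$, $k$ options $\{1,\dots,k\}$. User $i$ has state $x^i_t\in\{0,1\}$; mean-field $m_t=\frac1n\sum_i\mathbb{1}(x^i_t=1)\in\mathcal{M}:=\{0,\frac1n,\dots,1\}$. A desired load trajectory is given by a set $\mathcal{S}$, maps $f:\mathcal{S}\to\mathcal{S}$, $h:\mathcal{S}\to[0,1]$, known $s_1$, $s_{t+1}=f(s_t)$, $\theta_t=h(s_t)$. Each option $u$ has participation rate $\alpha(u)\in[0,1]$, delivery rate $q(u,m)\in(0,1]$, reserve price $c_r(u,1-m)\ge0$, demand price $c_d(u,m)\ge0$ (in the corollary these may also depend on $s_t$). Given option $u^i_t$ and $m_t$: $\mathbb{P}(x^i_{t+1}=1\mid x^i_t=0,\cdot)=(1-\alpha(u^i_t))p$, $\mathbb{P}(x^i_{t+1}=0\mid x^i_t=1,\cdot)=q(u^i_t,m_t)$ (complements otherwise), users' transitions conditionally independent given current joint states and actions. Per-user cost $c(x,u,m)=\mathbb{1}(x=0)c_r(u,1-m)+\mathbb{1}(x=1)c_d(u,m)$. $D:\mathcal{M}\times[0,1]\to\mathbb{R}_{\ge0}$ is a distance function and $\beta\in(0,1)$. Admissible strategies: $u^i_t=g_t(x^i_t,m_{1:t})$, $g_t:\{0,1\}\times\mathcal{M}^t\to\{1,\dots,k\}$, common to all users; reserve action $g^r_t=g_t(0,m_{1:t})$, demand action $g^d_t=g_t(1,m_{1:t})$. Cost $J(g)=\mathbb{E}^g\big[\sum_{t=1}^\infty\beta^{t-1}\frac1n\big(\sum_i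 c(x^i_t,u^i_t,m_t)+D(m_t,\theta_t)\big)\big]$. *)

(* Defs.v *)
From HB Require Import structures.
From mathcomp Require Import all_boot all_order all_algebra.
From mathcomp Require Import boolp classical_sets reals ereal topology normedtype sequences.
Set Implicit Arguments. Unset Strict Implicit. Unset Printing Implicit Defensive.
Import Order.TTheory GRing.Theory Num.Theory.
Local Open Scope ring_scope.

(* Options are 'I_k ({1..k} shifted to {0..k-1}); S is the set of states of
   the desired load trajectory. *)
Record model (R : realType) (S : Type) (k : nat) := Model {
  dem_p  : R;
  disc   : R;
  alpha  : S -> 'I_k -> R;
  deliv  : S -> 'I_k -> R -> R;
  c_res  : S -> 'I_k -> R -> R;    (* reserve price c_r(s,u,1-m) (3rd arg is 1-m) *)
  c_dem  : S -> 'I_k -> R -> R;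
  dist   : R -> R -> R;
  f_traj : S -> S;
  h_traj : S -> R;
  s_init : S
}.

(* joint state of the n users: x i = true  <->  x^i = 1 *)
Notation state n := {ffun 'I_n -> bool}.

(* the mean field m = j/n is represented by the count j : 'I_n.+1 *)
Definition mval (R : realType) (n : nat) (j : 'I_n.+1) : R := j%:R / n%:R.

Definition count (n : nat) (x : state n) : 'I_n.+1 := inord #|[set i | x i]|.

(* time is 0-indexed: time t here is time t+1 of the paper *)
Definition s_at R S k (M : model R S k) (t : nat) : S := iter t (f_traj M) (s_init M).
Definition theta R S k (M : model R S k) (t : nat) : R := h_traj M (s_at M t).

(* admissible strategies: u^i_t = g t x^i_t m_{1:t}, the history m_{1:t}
   being given as the sequence of mean fields (of length t+1, 0-indexed) *)
Definition strategy (n k : nat) := nat -> bool -> seq 'I_n.+1 -> 'I_k.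

Definition user_trans R S k (M : model R S k) (s : S) (u : 'I_k) (m : R)
  (x y : bool) : R :=
  match x, y with
  | false, true  => (1 - alpha M s u) * dem_p M
  | false, false => 1 - (1 - alpha M s u) * dem_p M
  | true, false  => deliv M s u m
  | true, true   => 1 - deliv M s u m
  end.

Definition cost R S k (M : model R S k) (s : S) (x : bool) (u : 'I_k) (m : R) : R :=
  if x then c_dem M s u m else c_res M s u (1 - m).

Definition joint_trans R S n k (M : model R S k) (g : strategy n k) (t : nat)
  (hist : seq 'I_n.+1) (x y : state n) : R :=
  \prod_(i < n) user_trans M (s_at M t) (g t (x i) hist) (mval R (count x)) (x i) (y i).

Definition stage_cost R S n k (M : model R S k) (g : strategy n k) (t : nat)
  (hist : seq 'I_n.+1) (x : state n) : R :=
  n%:R^-1 * (\sum_(i < n) cost M (s_at M t) (x i) (g t (x i) hist) (mval R (count x))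
             + dist M (mval R (count x)) (theta M t)).

(* expected cost at time tau + N, given state x and history hist at time tau *)
Fixpoint exp_cost_from R S n k (M : model R S k) (g : strategy n k) (N tau : nat)
  (x : state n) (hist : seq 'I_n.+1) : R :=
  match N with
  | 0 => stage_cost M g tau hist x
  | N'.+1 => \sum_(y : state n) joint_trans M g tau hist x y *
               exp_cost_from M g N' tau.+1 y (rcons hist (count y))
  end.

Definition Ecost R S n k (M : model R S k) (P0 : state n -> R) (g : strategy n k)
  (t : nat) : R :=
  \sum_(x : state n) P0 x * exp_cost_from M g t 0 x [:: count x].

Definition J R S n k (M : model R S k) (P0 : state n -> R) (g : strategy n k) : \bar R :=
  (\sum_(0 <= t <oo) ((disc M ^+ t * Ecost M P0 g t)%:E))%E.

Definition ell R S n k (M : model R S k) (s : S) (j : 'I_n.+1) (gr gd : 'I_k) : R :=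
  (1 - mval R j) * c_res M s gr (1 - mval R j) + mval R j * c_dem M s gd (mval R j)
  + n%:R^-1 * dist M (mval R j) (h_traj M s).

Definition binom_pmf (R : realType) (N a : nat) (r : R) : R :=
  'C(N, a)%:R * r ^+ a * (1 - r) ^+ (N - a).

(* P(m_{t+1} = j'/n | m_t = j/n, s_t = s, g^r, g^d): the new number of users
   in state 1 is Bin(n-j, (1-alpha(s,g^r))p) + Bin(j, 1-q(s,g^d,m)),
   the two binomials being independent. *)
Definition mf_trans R S n k (M : model R S k) (s : S) (j : 'I_n.+1) (gr gd : 'I_k)
  (j' : 'I_n.+1) : R :=
  \sum_(a < n.+1) \sum_(b < n.+1)
    (if (a + b == j')%N
     then binom_pmf (n - j) a ((1 - alpha M s gr) * dem_p M)
          * binom_pmf j b (1 - deliv M s gd (mval R j))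
     else 0).

Definition bellman_rhs R S n k (M : model R S k) (V : 'I_n.+1 -> S -> R)
  (j : 'I_n.+1) (s : S) (gr gd : 'I_k) : R :=
  ell M s j gr gd + disc M * \sum_(j' : 'I_n.+1) mf_trans M s j gr gd j' * V j' (f_traj M s).

(* u^{i,*}_t = 1(x=0) g^{r,*}(m_t,s_t) + 1(x=1) g^{d,*}(m_t,s_t),
   m_t being the last entry of the history *)
Definition g_star R S n k (M : model R S k) (gr gd : 'I_n.+1 -> S -> 'I_k)
  : strategy n k :=
  fun t x hist => let j := last ord0 hist in
    if x then gd j (s_at M t) else gr j (s_at M t).

(* Main.v *)
Require Import Defs.
From HB Require Import structures.
From mathcomp Require Import all_boot all_order all_algebra.
From mathcomp Require Import boolp classical_sets reals ereal topology normedtype sequences.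
From mathcomp Require Import ring lra.
Import Order.TTheory GRing.Theory Num.Theory.
Import numFieldNormedType.Exports.
Local Open Scope ring_scope.

Lemma coef_binom (R : realType) (N a : nat) (r : R) :
  ((((1 - r)%:P + r *: 'X) ^+ N)`_a) = binom_pmf N a r.
Proof.
rewrite exprDn coef_sum.
under eq_bigr => i _.
  rewrite -rmorphXn exprZn -scalerAr coefMn.
  rewrite coefZ mul_polyC coefZ coefXn.
  over.
rewrite /binom_pmf /=.
case: (ltnP a N.+1) => ha.
  rewrite (bigD1 (Ordinal ha)) //= eqxx big1 ?addr0.
    rewrite mulr1 -mulr_natl. ring.
  move=> i ne; have -> : (a == i) = false.
    by apply/negbTE; apply: contra ne => /eqP e; apply/eqP/val_inj; rewrite /= e.
  by rewrite mulr0 mulr0 mul0rn.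
rewrite big1 ?bin_small ?mul0r //.
move=> i _; have -> : (a == i) = false.
  by apply/negbTE/eqP => e; move: (ltn_ord i); rewrite -e ltnNge ha.
by rewrite mulr0 mulr0 mul0rn.
Qed.

Lemma sum_pick (R : realType) (n d : nat) (phi : 'I_n.+1 -> R) : (d <= n)%N ->
  \sum_(c < n.+1) ((c : nat) == d)%:R * phi c = phi (inord d).
Proof.
move=> hd; rewrite (bigD1 (inord d)) //= inordK ?eqxx ?mul1r // big1 ?addr0 //.
move=> c ne; rewrite (_ : (c == d :> nat) = false) ?mul0r //.
by apply/negbTE; apply: contra ne => /eqP <-; rewrite inord_val.
Qed.

Lemma card_le (n : nat) (y : {ffun 'I_n -> bool}) : (#|[set i | y i]| <= n)%N.
Proof. by rewrite -[X in (_ <= X)%N]card_ord max_card. Qed.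

Lemma sum_ffun_count (R : realType) (n : nat) (w : 'I_n -> bool -> R)
  (phi : 'I_n.+1 -> R) :
  \sum_(y : {ffun 'I_n -> bool}) (\prod_i w i (y i)) * phi (Defs.count y)
  = \sum_(c < n.+1) (\prod_(i < n) ((w i false)%:P + w i true *: 'X))`_c * phi c.
Proof.
have E : \prod_(i < n) ((w i false)%:P + w i true *: 'X)
   = \sum_(y : {ffun 'I_n -> bool}) (\prod_i w i (y i)) *: 'X^#|[set i | y i]|.
  transitivity (\prod_(i < n) \sum_(b : bool) w i b *: 'X^b).
    by apply: eq_bigr => i _; rewrite big_bool /= expr0 expr1 alg_polyC addrC.
  rewrite (bigA_distr_bigA (fun (i : 'I_n) (b : bool) => w i b *: 'X^b)). apply: (eq_bigr _ _) => y _.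
  transitivity (\prod_(i0 < n) (w i0 (y i0) *: 'X^(y i0))); first by [].
  rewrite scaler_prod prodrXr.
  congr (_ *: 'X^_).
  rewrite cardsE -sum1_card [RHS]big_mkcond /=; apply: eq_bigr => i _. change ((y i : nat) = (if y i then 1 else 0)%N); by case: (y i).
rewrite E.
under [RHS]eq_bigr => c _ do rewrite coef_sum mulr_suml.
rewrite [RHS]exchange_big /=; apply: eq_bigr => y _.
under [RHS]eq_bigr => c _ do rewrite coefZ coefXn -mulrA.
by rewrite -mulr_sumr sum_pick ?card_le.
Qed.

Lemma inner_sum (R : realType) (n a c : nat) (F : 'I_n.+1 -> R) : (c <= n)%N ->
  \sum_(b < n.+1) (if (a + b == c)%N then F b else 0)
  = if (a <= c)%N then F (inord (c - a)) else 0.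
Proof.
move=> hc; case: leqP => hac.
  rewrite (bigD1 (inord (c - a))) //= inordK; last by rewrite ltnS (leq_trans (leq_subr _ _)).
  rewrite subnKC // eqxx big1 ?addr0 // => b ne.
  case: eqP => // e; case/negP: ne; apply/eqP/val_inj; rewrite /= inordK.
    by rewrite -e addKn.
  by rewrite ltnS (leq_trans (leq_subr _ _)).
rewrite big1 // => b _; case: eqP => // e.
by move: hac; rewrite -e ltnNge leq_addr.
Qed.

Lemma conv_coef (R : realType) (n c : nat) (p q : {poly R}) : (c <= n)%N ->
  (p * q)`_c = \sum_(a < n.+1) \sum_(b < n.+1)
     (if (a + b == c)%N then p`_a * q`_b else 0).
Proof.
move=> hc; rewrite coefM.
under [RHS]eq_bigr => a _ do rewrite (@inner_sum R n a c (fun b : 'I_n.+1 => p`_a * q`_b)) //.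
rewrite -big_mkcond /=.
rewrite (big_ord_widen n.+1 (fun a => p`_a * q`_(c - a))) ?ltnS //.
apply: eq_bigr => a ha; rewrite inordK // ltnS (leq_trans (leq_subr _ _)) //.
Qed.

Lemma count_val (n : nat) (x : {ffun 'I_n -> bool}) :
  (Defs.count x : nat) = #|[set i | x i]|.
Proof. by rewrite /Defs.count inordK // ltnS card_le. Qed.

Lemma lump (R : realType) (S : Type) (n k : nat) (M : model R S k) (g : strategy n k)
  (t : nat) (hist : seq 'I_n.+1) (x : {ffun 'I_n -> bool}) (phi : 'I_n.+1 -> R) :
  \sum_(y : {ffun 'I_n -> bool}) joint_trans M g t hist x y * phi (Defs.count y)
  = \sum_(j : 'I_n.+1) mf_trans M (s_at M t) (Defs.count x) (g t false hist)
       (g t true hist) j * phi j.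
Proof.
rewrite /joint_trans (@sum_ffun_count R n (fun i b => user_trans M (s_at M t)
   (g t (x i) hist) (mval R (Defs.count x)) (x i) b)).
apply: eq_bigr => c _; congr (_ * _).
set s := s_at M t; set m := mval R (Defs.count x).
set r := (1 - alpha M s (g t false hist)) * dem_p M.
set q := deliv M s (g t true hist) m.
rewrite (bigID (fun i => x i)) /=.
rewrite (eq_bigr (fun _ => ((1 - (1 - q))%:P + (1 - q) *: 'X))); last first.
  by move=> i ->; rewrite /= (_ : 1 - (1 - q) = q) //; ring.
rewrite [X in _ * X](eq_bigr (fun _ => ((1 - r)%:P + r *: 'X))); last first.
  by move=> i /negbTE ->.
rewrite !prodr_const.
have c1 : #|(fun i : 'I_n => x i)| = Defs.count x :> nat.
  by rewrite count_val cardsE.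
have c2 : #|(fun i : 'I_n => ~~ x i)| = (n - Defs.count x)%N.
  rewrite -c1; have h := cardC (fun i : 'I_n => x i); rewrite card_ord in h.
  move: h => /(congr1 (fun z => z - #|(fun i : 'I_n => x i)|)%N); rewrite addKn => <-.
  by apply: eq_card => i; rewrite !inE.
rewrite c1 c2 mulrC (@conv_coef R n c _ _ (ltn_ord c)) /mf_trans.
apply: eq_bigr => a _; apply: eq_bigr => b _.
by rewrite !coef_binom.
Qed.

Lemma card_split (n : nat) (x : {ffun 'I_n -> bool}) :
  #|(fun i : 'I_n => x i)| = Defs.count x :> nat /\
  #|(fun i : 'I_n => ~~ x i)| = (n - Defs.count x)%N.
Proof.
have c1 : #|(fun i : 'I_n => x i)| = Defs.count x :> nat.
  by rewrite count_val cardsE.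
split=> //.
rewrite -c1; have h := cardC (fun i : 'I_n => x i); rewrite card_ord in h.
move: h => /(congr1 (fun z => z - #|(fun i : 'I_n => x i)|)%N); rewrite addKn => <-.
by apply: eq_card => i; rewrite !inE.
Qed.

Lemma stage_ell (R : realType) (S : Type) (n k : nat) (M : model R S k) (g : strategy n k)
  (t : nat) (hist : seq 'I_n.+1) (x : {ffun 'I_n -> bool}) : (0 < n)%N ->
  stage_cost M g t hist x
  = ell M (s_at M t) (Defs.count x) (g t false hist) (g t true hist).
Proof.
move=> n0; rewrite /stage_cost /ell /theta.
rewrite (bigID (fun i => x i)) /=.
rewrite (eq_bigr (fun _ => c_dem M (s_at M t) (g t true hist) (mval R (Defs.count x))));
  last by move=> i ->.
rewrite [\sum_(i < n | ~~ x i) _](eq_bigr (fun _ => c_res M (s_at M t) (g t false hist)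
   (1 - mval R (Defs.count x)))); last by move=> i /negbTE ->.
rewrite !sumr_const; have [c1 c2] := card_split _ x. rewrite c2 c1.
have jn : (Defs.count x <= n)%N by rewrite -ltnS ltn_ord.
have nz : (n%:R : R) != 0 by rewrite pnatr_eq0 -lt0n.
rewrite /mval.
move: (c_dem _ _ _ _) (c_res _ _ _ _) (dist _ _ _) => a b d.
move: (Defs.count x : nat) jn => j jn.
rewrite -(mulr_natl a j) -(mulr_natl b (n - j)) natrB //.
field.
exact: nz.
Qed.

Fixpoint expV (R : realType) (S : Type) (n k : nat) (M : model R S k) (g : strategy n k)
  (V : 'I_n.+1 -> S -> R) (N tau : nat) (x : {ffun 'I_n -> bool}) (hist : seq 'I_n.+1) : R :=
  match N with
  | 0 => V (Defs.count x) (s_at M tau)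
  | N'.+1 => \sum_(y : {ffun 'I_n -> bool}) joint_trans M g tau hist x y *
               expV _ _ _ _ M g V N' tau.+1 y (rcons hist (Defs.count y))
  end.
Arguments expV {R S n k} M g V N tau x hist.

Lemma bellman_eq (R : realType) (S : Type) (n k : nat) (M : model R S k) (g : strategy n k)
  (V : 'I_n.+1 -> S -> R) (tau : nat) (x : {ffun 'I_n -> bool}) (hist : seq 'I_n.+1) :
  (0 < n)%N ->
  bellman_rhs M V (Defs.count x) (s_at M tau) (g tau false hist) (g tau true hist)
  = stage_cost M g tau hist x + disc M * \sum_(y : {ffun 'I_n -> bool})
      joint_trans M g tau hist x y * V (Defs.count y) (s_at M tau.+1).
Proof.
move=> n0; rewrite /bellman_rhs stage_ell //; congr (_ + disc M * _).
by rewrite (@lump R S n k M g tau hist x (fun j => V j (f_traj M (s_at M tau)))).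
Qed.

Lemma step_identity (R : realType) (S : Type) (n k : nat) (M : model R S k) (g : strategy n k)
  (V : 'I_n.+1 -> S -> R) (N tau : nat) (x : {ffun 'I_n -> bool}) (hist : seq 'I_n.+1) :
  \sum_(t < N.+1) disc M ^+ t * exp_cost_from M g t tau x hist
    + disc M ^+ N.+1 * expV M g V N.+1 tau x hist
  = stage_cost M g tau hist x + disc M * \sum_(y : {ffun 'I_n -> bool})
      joint_trans M g tau hist x y *
      (\sum_(t < N) disc M ^+ t * exp_cost_from M g t tau.+1 y (rcons hist (Defs.count y))
       + disc M ^+ N * expV M g V N tau.+1 y (rcons hist (Defs.count y))).
Proof.
rewrite big_ord_recl /= expr0 mul1r -addrA; congr (_ + _).
under eq_bigr => t _ do rewrite /= exprS -mulrA mulr_sumr.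
rewrite -mulr_sumr exprS -mulrA -mulrDr; congr (disc M * _).
rewrite exchange_big /= [disc M ^+ N * _]mulr_sumr -big_split /=; apply: eq_bigr => y _.
rewrite mulrDr mulr_sumr; congr (_ + _); last by ring.
by apply: eq_bigr => t _; rewrite add0n; ring.
Qed.

Lemma sum_prod_ffun (R : realType) (n : nat) (w : 'I_n -> bool -> R) :
  \sum_(y : {ffun 'I_n -> bool}) \prod_i w i (y i) = \prod_(i < n) (w i true + w i false).
Proof.
symmetry; transitivity (\prod_(i < n) \sum_(b : bool) w i b).
  by apply: eq_bigr => i _; rewrite big_bool.
by rewrite (bigA_distr_bigA (fun (i : 'I_n) (b : bool) => w i b)).
Qed.

Lemma ut_ge0 (R : realType) (S : Type) (n k : nat) (M : model R S k) :
  0 < dem_p M < 1 -> (forall s u, 0 <= alpha M s u <= 1) ->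
  (forall s u (j : 'I_n.+1), 0 < deliv M s u (mval R j) <= 1) ->
  forall s u (j : 'I_n.+1) b b', 0 <= user_trans M s u (mval R j) b b'.
Proof.
move=> /andP[p0 p1] Ha Hq s u j b b'.
have /andP[a0 a1] := Ha s u; have /andP[q0 q1] := Hq s u j.
case: b; case: b' => /=; try lra; nra.
Qed.

Lemma jt_ge0 (R : realType) (S : Type) (n k : nat) (M : model R S k) (g : strategy n k) :
  0 < dem_p M < 1 -> (forall s u, 0 <= alpha M s u <= 1) ->
  (forall s u (j : 'I_n.+1), 0 < deliv M s u (mval R j) <= 1) ->
  forall tau hist x y, 0 <= joint_trans M g tau hist x y.
Proof.
move=> Hp Ha Hq tau hist x y; rewrite /joint_trans.
by apply: prodr_ge0 => i _; apply: ut_ge0.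
Qed.

Lemma jt_sum (R : realType) (S : Type) (n k : nat) (M : model R S k) (g : strategy n k)
  tau hist (x : {ffun 'I_n -> bool}) :
  \sum_(y : {ffun 'I_n -> bool}) joint_trans M g tau hist x y = 1.
Proof.
rewrite /joint_trans (@sum_prod_ffun R n (fun i b => user_trans M (s_at M tau)
   (g tau (x i) hist) (mval R (Defs.count x)) (x i) b)).
by apply: big1 => i _; case: (x i) => /=; ring.
Qed.
Arguments jt_sum {R S n k} M g tau hist x.

Lemma expV_bound (R : realType) (S : Type) (n k : nat) (M : model R S k) (g : strategy n k)
  (V : 'I_n.+1 -> S -> R) (B : R) :
  (forall tau hist x y, 0 <= joint_trans M g tau hist x y) ->
  (forall j s, `|V j s| <= B) ->
  forall N tau x hist, `|expV M g V N tau x hist| <= B.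
Proof.
move=> Hjt HB; elim=> [|N IH] tau x hist /=; first exact: HB.
apply: le_trans (ler_norm_sum _ _ _) _.
rewrite -[B]mul1r -(jt_sum M g tau hist x) mulr_suml.
apply: ler_sum => y _; rewrite normrM ger0_norm //.
by apply: ler_wpM2l => //; apply: IH.
Qed.

Lemma stage_ge0 (R : realType) (S : Type) (n k : nat) (M : model R S k) (g : strategy n k) :
  (forall s u (j : 'I_n.+1), 0 <= c_res M s u (1 - mval R j)) ->
  (forall s u (j : 'I_n.+1), 0 <= c_dem M s u (mval R j)) ->
  (forall (j : 'I_n.+1) th, 0 <= th <= 1 -> 0 <= dist M (mval R j) th) ->
  (forall s, 0 <= h_traj M s <= 1) ->
  forall tau hist x, 0 <= stage_cost M g tau hist x.
Proof.
move=> Hr Hd HD Hh tau hist x; rewrite /stage_cost.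
apply: mulr_ge0; first by rewrite invr_ge0.
apply: addr_ge0; last by apply: HD; apply: Hh.
by apply: sumr_ge0 => i _; rewrite /cost; case: (x i).
Qed.

Lemma cost_ge0 (R : realType) (S : Type) (n k : nat) (M : model R S k) (g : strategy n k) :
  (forall tau hist x, 0 <= stage_cost M g tau hist x) ->
  (forall tau hist x y, 0 <= joint_trans M g tau hist x y) ->
  forall N tau x hist, 0 <= exp_cost_from M g N tau x hist.
Proof.
move=> Hs Hjt; elim=> [|N IH] tau x hist /=; first exact: Hs.
by apply: sumr_ge0 => y _; apply: mulr_ge0.
Qed.

Lemma LB (R : realType) (S : Type) (n k : nat) (M : model R S k) (g : strategy n k)
  (V : 'I_n.+1 -> S -> R) :
  (0 < n)%N -> 0 <= disc M ->
  (forall tau hist x y, 0 <= joint_trans M g tau hist x y) ->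
  (forall j s gr gd, V j s <= bellman_rhs M V j s gr gd) ->
  forall N tau x hist, V (Defs.count x) (s_at M tau) <=
    \sum_(t < N) disc M ^+ t * exp_cost_from M g t tau x hist
    + disc M ^+ N * expV M g V N tau x hist.
Proof.
move=> n0 Hd Hjt HV; elim=> [|N IH] tau x hist.
  by rewrite big_ord0 expr0 mul1r add0r.
rewrite step_identity.
apply: le_trans (HV _ _ (g tau false hist) (g tau true hist)) _.
rewrite bellman_eq // lerD2l; apply: ler_wpM2l => //.
apply: ler_sum => y _; apply: ler_wpM2l => //; exact: IH.
Qed.

Lemma EQ (R : realType) (S : Type) (n k : nat) (M : model R S k) (g : strategy n k)
  (V : 'I_n.+1 -> S -> R) :
  (0 < n)%N ->
  (forall tau hist x, last ord0 hist = Defs.count x ->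
     V (Defs.count x) (s_at M tau) =
     bellman_rhs M V (Defs.count x) (s_at M tau) (g tau false hist) (g tau true hist)) ->
  forall N tau x hist, last ord0 hist = Defs.count x ->
    V (Defs.count x) (s_at M tau) =
    \sum_(t < N) disc M ^+ t * exp_cost_from M g t tau x hist
    + disc M ^+ N * expV M g V N tau x hist.
Proof.
move=> n0 HV; elim=> [|N IH] tau x hist hl.
  by rewrite big_ord0 expr0 mul1r add0r.
rewrite step_identity (HV tau hist x hl) bellman_eq //; congr (_ + disc M * _).
apply: eq_bigr => y _; rewrite -IH //; exact: last_rcons.
Qed.

Section Analysis.
Local Open Scope classical_set_scope.
Lemma geo_cvg (R : realType) (d v c : R) : 0 <= d < 1 ->
  (fun N : nat => v + d ^+ N * c) @ \oo --> v.
Proof.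
move=> /andP[d0 d1].
have h : (fun N : nat => d ^+ N) @ \oo --> (0:R) by apply: cvg_expr; rewrite ger0_norm.
have e : v = v + 0 * c by rewrite mul0r addr0.
rewrite [X in _ --> X]e.
apply: cvgD; first exact: cvg_cst.
by apply: cvgM => //; exact: cvg_cst.
Qed.

Lemma EFin_cvg_lim (R : realType) (f : nat -> R) (v : R) :
  f @ \oo --> v -> limn (EFin \o f) = v%:E.
Proof. by move=> h; rewrite EFin_lim ?(cvg_lim _ h) //; apply/cvg_ex; exists v. Qed.

Lemma ser_eq (R : realType) (a : nat -> R) (v c d : R) : 0 <= d < 1 ->
  (forall N, `|\sum_(t < N) a t - v| <= d ^+ N * c) ->
  (\sum_(0 <= t <oo) (a t)%:E = v%:E)%E.
Proof.
move=> hd hb.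
have -> : (fun N => \sum_(0 <= t < N) (a t)%:E)%E = EFin \o (fun N => \sum_(t < N) a t).
  by apply: funext => N; rewrite /= sumEFin big_mkord.
apply: EFin_cvg_lim.
have hn : \forall N \near \oo, v + d ^+ N * (- c) <= \sum_(t < N) a t <= v + d ^+ N * c.
  near=> N; have := hb N; rewrite ler_norml => /andP[h1 h2].
  rewrite mulrN; apply/andP; split; lra.
  Unshelve. all: end_near.
exact: (squeeze_cvgr hn (geo_cvg R d v (- c) hd) (geo_cvg R d v c hd)).
Qed.

Lemma ser_ge (R : realType) (a : nat -> R) (v c d : R) : 0 <= d < 1 ->
  (forall t, 0 <= a t) ->
  (forall N, v + d ^+ N * c <= \sum_(t < N) a t) ->
  (v%:E <= \sum_(0 <= t <oo) (a t)%:E)%E.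
Proof.
move=> hd ha hb.
rewrite -(@EFin_cvg_lim _ _ _ (geo_cvg R d v c hd)).
apply: lime_le.
  apply/cvg_ex; exists v%:E; apply: cvg_comp (geo_cvg R d v c hd) _; exact: cvg_id.
near=> N; apply: le_trans (nneseries_lim_ge N _); last by move=> i _ _; rewrite lee_fin.
by rewrite /= sumEFin big_mkord lee_fin.
Unshelve. all: end_near.
Qed.

End Analysis.

Theorem corollary1 (R : realType) (S : Type) (n k : nat) (M : model R S k)
  (P0 : {ffun 'I_n -> bool} -> R)
  (V : 'I_n.+1 -> S -> R) (gr_star gd_star : 'I_n.+1 -> S -> 'I_k) :
  (0 < n)%N -> (0 < k)%N ->
  0 < dem_p M < 1 ->
  0 < disc M < 1 ->
  (forall s u, 0 <= alpha M s u <= 1) ->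
  (forall s u (j : 'I_n.+1), 0 < deliv M s u (mval R j) <= 1) ->
  (forall s u (j : 'I_n.+1), 0 <= c_res M s u (1 - mval R j)) ->
  (forall s u (j : 'I_n.+1), 0 <= c_dem M s u (mval R j)) ->
  (forall (j : 'I_n.+1) th, 0 <= th <= 1 -> 0 <= dist M (mval R j) th) ->
  (forall s, 0 <= h_traj M s <= 1) ->
  (forall x, 0 <= P0 x) -> \sum_x P0 x = 1 ->
  (* V is the (bounded) solution of the dynamic program *)
  (exists B : R, forall j s, `|V j s| <= B) ->
  (forall j s, (forall gr gd, V j s <= bellman_rhs M V j s gr gd) /\
               exists gr gd, V j s = bellman_rhs M V j s gr gd) ->
  (* (gr_star, gd_star) is a minimizer *)
  (forall j s gr gd, bellman_rhs M V j s (gr_star j s) (gd_star j s)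
                     <= bellman_rhs M V j s gr gd) ->
  forall g : strategy n k, (J M P0 (g_star M gr_star gd_star) <= J M P0 g)%E.
Proof.
move=> n0 k0 Hp Hd Ha Hq Hr Hc HD Hh HP0 HP1 [B HB] HV Hmin g.
have /andP[d0 d1] := Hd.
have B0 : 0 <= B := le_trans (normr_ge0 _) (HB ord0 (s_init M)).
have Hjt : forall g' : strategy n k, forall tau hist x y, 0 <= joint_trans M g' tau hist x y.
  by move=> g'; apply: (@jt_ge0 R S n k M g' Hp Ha Hq).
set gs := g_star M gr_star gd_star.
have Hstar : forall tau hist x, last ord0 hist = Defs.count x ->
    V (Defs.count x) (s_at M tau) =
    bellman_rhs M V (Defs.count x) (s_at M tau) (gs tau false hist) (gs tau true hist).
  move=> tau hist x hl; rewrite /gs /g_star /= hl.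
  apply/eqP; rewrite eq_le; apply/andP; split; first exact: (HV _ _).1.
  have [_ [gr [gd E]]] := HV (Defs.count x) (s_at M tau).
  rewrite [X in _ <= X]E; exact: Hmin.
have part : forall g' N,
    \sum_(t < N) disc M ^+ t * Ecost M P0 g' t
    + disc M ^+ N * (\sum_x P0 x * expV M g' V N 0 x [:: Defs.count x])
    = \sum_x P0 x * (\sum_(t < N) disc M ^+ t * exp_cost_from M g' t 0 x [:: Defs.count x]
        + disc M ^+ N * expV M g' V N 0 x [:: Defs.count x]).
  move=> g' N; rewrite /Ecost.
  under eq_bigr => t _ do rewrite mulr_sumr.
  rewrite exchange_big /= [disc M ^+ N * _]mulr_sumr -big_split /=.
  apply: eq_bigr => x _; rewrite mulrDr mulr_sumr; congr (_ + _); last by ring.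
  by apply: eq_bigr => t _; ring.
have Wb : forall g' : strategy n k, forall N,
    `|\sum_x P0 x * expV M g' V N 0 x [:: Defs.count x]| <= B.
  move=> g' N; apply: le_trans (ler_norm_sum _ _ _) _.
  rewrite -[B]mul1r -HP1 mulr_suml; apply: ler_sum => x _.
  rewrite normrM ger0_norm //; apply: ler_wpM2l => //.
  exact: (@expV_bound R S n k M g' V B (Hjt g') HB).
set v0 := \sum_x P0 x * V (Defs.count x) (s_at M 0).
have Jstar : J M P0 gs = v0%:E.
  rewrite /J; apply: (@ser_eq R _ v0 B (disc M)); first by rewrite (ltW d0) d1.
  move=> N; have e := part gs N.
  have ev : v0 = \sum_x P0 x * (\sum_(t < N) disc M ^+ t * exp_cost_from M gs t 0 x [:: Defs.count x]
        + disc M ^+ N * expV M gs V N 0 x [:: Defs.count x]).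
    rewrite /v0; apply: eq_bigr => x _; congr (_ * _).
    exact: (@EQ R S n k M gs V n0 Hstar).
  rewrite ev -e opprD addrA subrr add0r normrN normrM ger0_norm; last by apply: exprn_ge0; apply: ltW.
  by apply: ler_wpM2l; [apply: exprn_ge0; apply: ltW | exact: Wb].
rewrite Jstar /J; apply: (@ser_ge R _ v0 (- B) (disc M)); first by rewrite (ltW d0) d1.
  move=> t; apply: mulr_ge0; first by apply: exprn_ge0; apply: ltW.
  rewrite /Ecost; apply: sumr_ge0 => x _; apply: mulr_ge0 => //.
  apply: cost_ge0; last exact: Hjt.
  exact: stage_ge0.
move=> N; have e := part g N.
have L : v0 <= \sum_x P0 x * (\sum_(t < N) disc M ^+ t * exp_cost_from M g t 0 x [:: Defs.count x]
        + disc M ^+ N * expV M g V N 0 x [:: Defs.count x]).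
  rewrite /v0; apply: ler_sum => x _; apply: ler_wpM2l => //.
  apply: (@LB R S n k M g V n0 (ltW d0) (Hjt g)).
  by move=> j s gr gd; exact: (HV j s).1.
rewrite -e in L.
have W1 := Wb g N; rewrite ler_norml in W1; case/andP: W1 => W1 W2.
have : disc M ^+ N * (\sum_x P0 x * expV M g V N 0 x [:: Defs.count x]) <= disc M ^+ N * B.
  by apply: ler_wpM2l => //; by apply: exprn_ge0; apply: ltW.
move: L; set S1 := \sum_(t < N) _; set W := disc M ^+ N * _.
rewrite mulrN; lra.
Qed.
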